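(* Let $R$ be an integral domain. Then the image $\overline{\mathbf{U}_4(R)}=\mathbf{U}_4(R)/\mathbf{U}_4(R)'$ is a characteristic subgroup of $\overline{\mathbf{A}_4(R)}=\mathbf{A}_4(R)/\mathbf{U}_4(R)'$.
   Context: $\mathbf{A}_4(R)$ is the group of upper triangular $4\times4$ matrices over $R$ whose diagonal has the form $(1,u_2,u_3,1)$ with $u_2,u_3\in U(R)$. $\mathbf{U}_4(R)$ is its normal subgroup of upper unitriangular matrices and $\mathbf{U}_4(R)'=[\mathbf{U}_4(R),\mathbf{U}_4(R)]$. *)

(* Defs.v *)
From HB Require Import structures.
From mathcomp Require Import all_boot all_order all_algebra.
Set Implicit Arguments. Unset Strict Implicit. Unset Printing Implicit Defensive.
Import GRing.Theory.
Local Open Scope ring_scope.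

(* Groups inside the unit group of the matrix ring 'M[R]_4; group law = matrix
   product, inverse = ring inverse (invmx on invertible matrices). *)

Definition is_A4 (R : idomainType) (M : 'M[R]_4) : Prop :=
  (forall i j : 'I_4, (j < i)%N -> M i j = 0) /\
  (forall i : 'I_4, if (val i == 0%N) || (val i == 3%N) then M i i = 1
                    else M i i \is a GRing.unit).

Definition is_U4 (R : idomainType) (M : 'M[R]_4) : Prop :=
  (forall i j : 'I_4, (j < i)%N -> M i j = 0) /\ (forall i : 'I_4, M i i = 1).

Inductive in_U4' (R : idomainType) : 'M[R]_4 -> Prop :=
  | U4'_comm x y : is_U4 x -> is_U4 y -> in_U4' (x^-1 * y^-1 * x * y)
  | U4'_one : in_U4' 1
  | U4'_mul a b : in_U4' a -> in_U4' b -> in_U4' (a * b)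
  | U4'_inv a : in_U4' a -> in_U4' a^-1.

Definition congU4' (R : idomainType) (x y : 'M[R]_4) : Prop := in_U4' (x^-1 * y).

(* An automorphism of the quotient group A_4(R)/U_4(R)', presented through a
   lift f : A_4(R) -> A_4(R) on representatives: f is well defined and
   injective on cosets, multiplicative modulo U_4(R)', and surjective on
   cosets. Every automorphism of the quotient arises this way (choose a
   representative of the image of each coset) and every such f induces one. *)
Definition quot_aut_A4 (R : idomainType) (f : 'M[R]_4 -> 'M[R]_4) : Prop :=
  [/\ (forall x, is_A4 x -> is_A4 (f x)),
      (forall x y, is_A4 x -> is_A4 y -> (congU4' x y <-> congU4' (f x) (f y))),
      (forall x y, is_A4 x -> is_A4 y -> congU4' (f (x * y)) (f x * f y))
    & (forall y, is_A4 y -> exists2 x, is_A4 x & congU4' (f x) y)].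

(* Main.v *)
Require Import Defs.
From HB Require Import structures.
From mathcomp Require Import all_boot all_order all_algebra.
From mathcomp Require Import ring.
Set Implicit Arguments. Unset Strict Implicit. Unset Printing Implicit Defensive.
Import GRing.Theory.
Local Open Scope ring_scope.

Section S.
Variable R : idomainType.
Notation M4 := 'M[R]_4.
Definition o0 : 'I_4 := @Ordinal 4 0 isT.
Definition o1 : 'I_4 := @Ordinal 4 1 isT.
Definition o2 : 'I_4 := @Ordinal 4 2 isT.
Definition o3 : 'I_4 := @Ordinal 4 3 isT.

Lemma ord4P (P : 'I_4 -> Prop) : P o0 -> P o1 -> P o2 -> P o3 -> forall i, P i.
Proof.
move=> H0 H1 H2 H3 [[|[|[|[|n]]]] Hi] //.
- by rewrite (bool_irrelevance Hi isT).
- by rewrite (bool_irrelevance Hi isT).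
- by rewrite (bool_irrelevance Hi isT).
- by rewrite (bool_irrelevance Hi isT).
Qed.

Lemma sum4 (F : 'I_4 -> R) : \sum_k F k = F o0 + F o1 + F o2 + F o3.
Proof. rewrite !big_ord_recl big_ord0 addr0 !addrA. by congr (_ + _ + _ + _); congr F; apply: val_inj. Qed.

Definition UT (M : M4) := forall i j : 'I_4, (j < i)%N -> M i j = 0.

Lemma mulE (M N : M4) i j : (M * N) i j = \sum_k M i k * N k j.
Proof. by rewrite -mulmxE mxE. Qed.

Lemma UT_mul M N : UT M -> UT N -> UT (M * N).
Proof.
move=> HM HN i j lt; rewrite mulE big1 // => k _.
case: (ltnP k i) => hk; first by rewrite HM // mul0r.
by rewrite HN ?mulr0 //; apply: leq_trans hk.
Qed.

Lemma diag_mul M N i : UT M -> UT N -> (M * N) i i = M i i * N i i.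
Proof.
move=> HM HN; rewrite mulE (bigD1 i) //= big1 ?addr0 // => k hk.
case: (ltngtP k i) => h; first by rewrite HM // mul0r.
  by rewrite HN ?mulr0.
by move: hk; rewrite (val_inj h) eqxx.
Qed.

Lemma s0_mul M N : UT M -> UT N -> (M * N) o0 o1 = M o0 o0 * N o0 o1 + M o0 o1 * N o1 o1.
Proof. by move=> HM HN; rewrite mulE sum4 (HN o2 o1 isT) (HN o3 o1 isT) !mulr0 !addr0. Qed.
Lemma s1_mul M N : UT M -> UT N -> (M * N) o1 o2 = M o1 o1 * N o1 o2 + M o1 o2 * N o2 o2.
Proof. by move=> HM HN; rewrite mulE sum4 (HM o1 o0 isT) (HN o3 o2 isT) !mulr0 mul0r add0r addr0. Qed.
Lemma s2_mul M N : UT M -> UT N -> (M * N) o2 o3 = M o2 o2 * N o2 o3 + M o2 o3 * N o3 o3.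
Proof. by move=> HM HN; rewrite mulE sum4 (HM o2 o0 isT) (HM o2 o1 isT) !mul0r !add0r. Qed.

Lemma UT_unit M : UT M -> (forall i, M i i \is a GRing.unit) -> M \is a GRing.unit.
Proof.
move=> HM Hd.
have : M \in unitmx.
  rewrite unitmxE -det_tr det_trig; last first.
    by apply/is_trig_mxP => i j h; rewrite mxE HM.
  by apply/rpred_prod => i _; rewrite mxE.
by [].
Qed.
Lemma oneE i j : (1 : M4) i j = (i == j)%:R.
Proof. by rewrite mxE. Qed.

Section Inv.
Variable M : M4.
Hypothesis HM : UT M.
Hypothesis Hd : forall i, M i i \is a GRing.unit.
Let K := M^-1.
Let E : K * M = 1. Proof. by rewrite mulVr // UT_unit. Qed.

Lemma UT_inv : UT M^-1.
Proof.
suff H : forall n (i j : 'I_4), val j = n -> (j < i)%N -> K i j = 0.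
  by move=> i j; apply: H.
elim/ltn_ind => n IH i j hj lt.
have : (K * M) i j = 0 by rewrite E oneE; case: eqP => // h; rewrite h ltnn in lt.
rewrite mulE (bigD1 j) //= big1 ?addr0; last first.
  move=> k hk; case: (ltngtP k j) => h.
  - by rewrite (IH k _ i k erefl (ltn_trans h lt)) ?mul0r // -hj.
  - by rewrite HM ?mulr0.
  - by move: hk; rewrite (val_inj h) eqxx.
move=> h0; by rewrite -[K i j](mulrK (Hd j)) h0 mul0r.
Qed.

Lemma diag_inv i : M^-1 i i = (M i i)^-1.
Proof.
have : (K * M) i i = 1 by rewrite E oneE eqxx.
rewrite diag_mul //; last exact: UT_inv.
by move=> h; rewrite -[K i i](mulrK (Hd i)) h mul1r.
Qed.
End Inv.

Section Inv1.
Variable M : M4.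
Hypothesis HM : UT M.
Hypothesis Hd : forall i, M i i = 1.
Let Hu : forall i, M i i \is a GRing.unit. Proof. by move=> i; rewrite Hd unitr1. Qed.
Let E : M^-1 * M = 1. Proof. by rewrite mulVr // UT_unit. Qed.
Let HK : UT M^-1. Proof. exact: UT_inv. Qed.
Lemma diag_inv1 i : M^-1 i i = 1.
Proof. by rewrite diag_inv // Hd invr1. Qed.
Lemma s0_inv1 : M^-1 o0 o1 = - M o0 o1.
Proof.
have : (M^-1 * M) o0 o1 = 0 by rewrite E oneE.
rewrite s0_mul // !diag_inv1 !Hd mul1r mulr1 => /eqP.
by rewrite addrC addr_eq0 => /eqP.
Qed.
Lemma s1_inv1 : M^-1 o1 o2 = - M o1 o2.
Proof.
have : (M^-1 * M) o1 o2 = 0 by rewrite E oneE.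
rewrite s1_mul // !diag_inv1 !Hd mul1r mulr1 => /eqP.
by rewrite addrC addr_eq0 => /eqP.
Qed.
Lemma s2_inv1 : M^-1 o2 o3 = - M o2 o3.
Proof.
have : (M^-1 * M) o2 o3 = 0 by rewrite E oneE.
rewrite s2_mul // !diag_inv1 !Hd mul1r mulr1 => /eqP.
by rewrite addrC addr_eq0 => /eqP.
Qed.
End Inv1.
Definition Uni (M : M4) := UT M /\ forall i, M i i = 1.

Lemma uni_mul M N : Uni M -> Uni N -> Uni (M * N).
Proof.
move=> [HM dM] [HN dN]; split; first exact: UT_mul.
by move=> i; rewrite diag_mul // dM dN mulr1.
Qed.
Lemma uni_inv M : Uni M -> Uni M^-1.
Proof.
move=> [HM dM]; split; first by apply: UT_inv => // i; rewrite dM unitr1.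
exact: diag_inv1.
Qed.
Lemma uni_unit M : Uni M -> M \is a GRing.unit.
Proof. by move=> [HM dM]; apply: UT_unit => // i; rewrite dM unitr1. Qed.

Lemma s0_mul1 M N : Uni M -> Uni N -> (M * N) o0 o1 = M o0 o1 + N o0 o1.
Proof. by move=> [HM dM] [HN dN]; rewrite s0_mul // dM dN mul1r mulr1 addrC. Qed.
Lemma s1_mul1 M N : Uni M -> Uni N -> (M * N) o1 o2 = M o1 o2 + N o1 o2.
Proof. by move=> [HM dM] [HN dN]; rewrite s1_mul // dM dN mul1r mulr1 addrC. Qed.
Lemma s2_mul1 M N : Uni M -> Uni N -> (M * N) o2 o3 = M o2 o3 + N o2 o3.
Proof. by move=> [HM dM] [HN dN]; rewrite s2_mul // dM dN mul1r mulr1 addrC. Qed.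

Definition PP (m : M4) := Uni m /\ [/\ m o0 o1 = 0, m o1 o2 = 0 & m o2 o3 = 0].

Lemma U4'_PP m : in_U4' m -> PP m.
Proof.
elim=> {m}.
- move=> x y Hx Hy.
  have Ux : Uni x := Hx. have Uy : Uni y := Hy.
  have Uxi := uni_inv Ux. have Uyi := uni_inv Uy.
  have U1 := uni_mul Uxi Uyi. have U2 := uni_mul U1 Ux.
  split; first exact: uni_mul.
  rewrite s0_mul1 // s1_mul1 // s2_mul1 // s0_mul1 // s1_mul1 // s2_mul1 //.
  rewrite s0_mul1 // s1_mul1 // s2_mul1 //.
  rewrite (s0_inv1 Ux.1 Ux.2) (s1_inv1 Ux.1 Ux.2) (s2_inv1 Ux.1 Ux.2).
  rewrite (s0_inv1 Uy.1 Uy.2) (s1_inv1 Uy.1 Uy.2) (s2_inv1 Uy.1 Uy.2).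
  by split; ring.
- split; first by split; [move=> i j h; rewrite oneE; case: eqP => // e; rewrite e ltnn in h | move=> i; rewrite oneE eqxx].
  by split; rewrite oneE.
- move=> a b _ [Ua [a1 a2 a3]] _ [Ub [b1 b2 b3]]; split; first exact: uni_mul.
  by rewrite s0_mul1 // s1_mul1 // s2_mul1 // a1 a2 a3 b1 b2 b3 addr0.
- move=> a _ [Ua [a1 a2 a3]]; split; first exact: uni_inv.
  by rewrite (s0_inv1 Ua.1 Ua.2) (s1_inv1 Ua.1 Ua.2) (s2_inv1 Ua.1 Ua.2) a1 a2 a3 oppr0.
Qed.
End S.
Section T.
Variable R : idomainType.
Notation M4 := 'M[R]_4.
Implicit Types M N x y : M4.

Lemma A_UT M : is_A4 M -> UT M. Proof. by case. Qed.
Lemma A_d0 M : is_A4 M -> M o0 o0 = 1. Proof. by case=> _ /(_ o0). Qed.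
Lemma A_d3 M : is_A4 M -> M o3 o3 = 1. Proof. by case=> _ /(_ o3). Qed.
Lemma A_du M i : is_A4 M -> M i i \is a GRing.unit.
Proof.
case=> _ H; move: i; apply: ord4P.
- by have := H o0; rewrite /= => ->; rewrite unitr1.
- exact: (H o1).
- exact: (H o2).
- by have := H o3; rewrite /= => ->; rewrite unitr1.
Qed.
Lemma A_of M : UT M -> M o0 o0 = 1 -> M o3 o3 = 1 -> M o1 o1 \is a GRing.unit ->
  M o2 o2 \is a GRing.unit -> is_A4 M.
Proof. by move=> H h0 h3 h1 h2; split => //; apply: ord4P. Qed.
Lemma A_unit M : is_A4 M -> M \is a GRing.unit.
Proof. by move=> HA; apply: UT_unit => [|i]; [exact: A_UT|exact: A_du]. Qed.
Lemma A_mul M N : is_A4 M -> is_A4 N -> is_A4 (M * N).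
Proof.
move=> HM HN; have uM := A_UT HM; have uN := A_UT HN.
apply: A_of; first exact: UT_mul.
- by rewrite diag_mul // (A_d0 HM) (A_d0 HN) mulr1.
- by rewrite diag_mul // (A_d3 HM) (A_d3 HN) mulr1.
- by rewrite diag_mul // unitrM !A_du.
- by rewrite diag_mul // unitrM !A_du.
Qed.
Lemma U_A M : Uni M -> is_A4 M.
Proof. by move=> [H d]; apply: A_of => //; rewrite d unitr1. Qed.
Lemma U_of M : is_A4 M -> M o1 o1 = 1 -> M o2 o2 = 1 -> Uni M.
Proof.
move=> HA h1 h2; split; first exact: A_UT.
by apply: ord4P => //; [exact: A_d0|exact: A_d3].
Qed.

Definition sig M := (M o0 o0, M o1 o1, M o2 o2, M o3 o3, M o0 o1, M o1 o2, M o2 o3).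

Lemma sig_mul M N M' N' : UT M -> UT N -> UT M' -> UT N' ->
  sig M = sig M' -> sig N = sig N' -> sig (M * N) = sig (M' * N').
Proof.
move=> a b c d [= e0 e1 e2 e3 e4 e5 e6] [= f0 f1 f2 f3 f4 f5 f6].
by rewrite /sig !diag_mul // (s0_mul a b) (s1_mul a b) (s2_mul a b) (s0_mul c d) (s1_mul c d) (s2_mul c d)
  e0 e1 e2 e3 e4 e5 e6 f0 f1 f2 f3 f4 f5 f6.
Qed.

Lemma K1 x y : is_A4 x -> is_A4 y -> congU4' x y -> sig x = sig y.
Proof.
move=> Ax Ay /U4'_PP [[Uz dz] [z1 z2 z3]].
have -> : y = x * (x^-1 * y) by rewrite mulrA mulrV ?mul1r // A_unit.
have ux := A_UT Ax.
have uz : UT (x^-1 * y) := Uz.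
move: (x^-1 * y) uz dz z1 z2 z3 => z uz dz z1 z2 z3.
by rewrite /sig !(diag_mul _ ux uz) (s0_mul ux uz) (s1_mul ux uz) (s2_mul ux uz) !dz z1 z2 z3 !mulr0 !mulr1 !add0r.
Qed.

Lemma cong_sym x y : x \is a GRing.unit -> y \is a GRing.unit -> congU4' x y -> congU4' y x.
Proof.
move=> ux uy h; rewrite /congU4'.
have -> : y^-1 * x = (x^-1 * y)^-1 by rewrite invrM ?unitrV // invrK.
exact: U4'_inv.
Qed.
Lemma cong_trans x y z : y \is a GRing.unit -> congU4' x y -> congU4' y z -> congU4' x z.
Proof.
move=> uy h1 h2; rewrite /congU4'.
have -> : x^-1 * z = (x^-1 * y) * (y^-1 * z) by rewrite mulrA -(mulrA _ y) mulrV // mulr1.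
exact: U4'_mul.
Qed.
End T.
Section Core.
Variable R : idomainType.
Notation M4 := 'M[R]_4.
Implicit Types M N x y : M4.

Definition wE (a b : 'I_4) : M4 := 1 + delta_mx a b.
Lemma wE_ent (a b i j : 'I_4) : wE a b i j = (i == j)%:R + ((i == a) && (j == b))%:R.
Proof. by rewrite !mxE. Qed.

Lemma wE_uni (a b : 'I_4) : (a < b)%N -> Uni (wE a b).
Proof.
move=> ab; split.
- move=> i j h; rewrite wE_ent.
  have -> : (i == j) = false by apply/eqP=> e; rewrite e ltnn in h.
  case: eqP => [ea|] /=; last by rewrite addr0.
  case: eqP => [eb|] /=; last by rewrite addr0.
  by rewrite ea eb in h; move: (ltn_trans h ab); rewrite ltnn.
- move=> i; rewrite wE_ent eqxx.
  case: eqP => [ea|] /=; last by rewrite addr0.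
  case: eqP => [eb|] /=; last by rewrite addr0.
  by move: ab; rewrite -ea -eb ltnn.
Qed.

Lemma sqr_eq0 (u : R) : (u - 1) * (u - 1) = 0 -> u = 1.
Proof. by move/eqP; rewrite mulf_eq0 orbb subr_eq0 => /eqP. Qed.

Lemma core0 n m : is_A4 n -> is_A4 m ->
  sig m = sig ((wE o0 o1)^-1 * n * wE o0 o1) -> sig (m * n) = sig (n * m) -> n o1 o1 = 1.
Proof.
move=> An Am.
have Uw := wE_uni (isT : (o0 < o1)%N).
have Uv := uni_inv Uw.
have un := A_UT An; have um := A_UT Am.
have uvn : UT ((wE o0 o1)^-1 * n) := UT_mul Uv.1 un.
rewrite /sig (s0_mul uvn Uw.1) (s0_mul Uv.1 un) !(diag_mul _ uvn Uw.1) !(diag_mul _ Uv.1 un).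
rewrite (s0_inv1 Uw.1 Uw.2) !Uw.2 !Uv.2 !mulr1 !mul1r (A_d0 An) !wE_ent /= ?add0r ?addr0 ?mulr1 ?mul1r.
move=> [= _ e1 _ _ e4 _ _].
rewrite !(diag_mul _ um un) !(diag_mul _ un um) (s0_mul um un) (s0_mul un um).
move=> [= _ _ _ _ e _ _].
rewrite (A_d0 An) (A_d0 Am) e1 e4 in e.
apply: sqr_eq0.
move/eqP: e; rewrite -subr_eq0 => /eqP e.
by rewrite -[RHS]oppr0 -e; ring.
Qed.

Lemma core2 n m : is_A4 n -> is_A4 m ->
  sig m = sig ((wE o2 o3)^-1 * n * wE o2 o3) -> sig (m * n) = sig (n * m) -> n o2 o2 = 1.
Proof.
move=> An Am.
have Uw := wE_uni (isT : (o2 < o3)%N).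
have Uv := uni_inv Uw.
have un := A_UT An; have um := A_UT Am.
have uvn : UT ((wE o2 o3)^-1 * n) := UT_mul Uv.1 un.
rewrite /sig (s2_mul uvn Uw.1) (s2_mul Uv.1 un) !(diag_mul _ uvn Uw.1) !(diag_mul _ Uv.1 un).
rewrite (s2_inv1 Uw.1 Uw.2) !Uw.2 !Uv.2 !mulr1 !mul1r (A_d3 An) !wE_ent /= ?add0r ?addr0 ?mulr1 ?mul1r.
move=> [= _ _ e2 _ _ _ e6].
rewrite !(diag_mul _ um un) !(diag_mul _ un um) (s2_mul um un) (s2_mul un um).
move=> [= _ _ _ _ _ _ e].
rewrite (A_d3 An) (A_d3 Am) e2 e6 in e.
apply: sqr_eq0.
move/eqP: e; rewrite -subr_eq0 => /eqP e.
by rewrite -[RHS]oppr0 -e; ring.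
Qed.
End Core.
Lemma sig_eq_mul (R : idomainType) (M N M' N' : 'M[R]_4) : UT M -> UT N -> UT M' -> UT N' ->
  sig M = sig M' -> sig N = sig N' -> sig (M * N) = sig (M' * N').
Proof. exact: sig_mul. Qed.

Unset Implicit Arguments.
Theorem mainTheorem10 (R : idomainType) (f : 'M[R]_4 -> 'M[R]_4) :
  quot_aut_A4 f ->
  forall x : 'M[R]_4, is_A4 x -> (is_U4 x <-> is_U4 (f x)).
Proof.
move=> [HA Hc Hm Hs] x Ax.
have AU : forall M : 'M[R]_4, is_A4 M -> UT M := fun M h => A_UT h.
have Wu0 := @wE_uni R o0 o1 isT.
have Wu2 := @wE_uni R o2 o3 isT.
split.
- move=> Ux.
  have Uxx : Uni x := Ux.
  have An := HA x Ax.
  have step : forall w : 'M[R]_4, Uni w -> exists m, [/\ is_A4 m,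
      sig m = sig (w^-1 * f x * w) & sig (m * f x) = sig (f x * m)].
    move=> w Uw; have Aw := U_A Uw; have uw := uni_unit Uw.
    case: (Hs w Aw) => b Ab cb.
    have ub := A_unit Ab.
    have UTbi : UT b^-1 := UT_inv (AU b Ab) (fun i => @A_du _ b i Ab).
    have Uy : Uni (b^-1 * x * b).
      split; first by apply: UT_mul; [apply: UT_mul => //; exact: Uxx.1| exact: AU].
      move=> i; rewrite (diag_mul _ (UT_mul UTbi Uxx.1) (AU b Ab)) (diag_mul _ UTbi Uxx.1).
      by rewrite (diag_inv (AU b Ab) (fun i => @A_du _ b i Ab)) Uxx.2 mulr1 mulVr // A_du.
    have [y ey] : exists y, y = b^-1 * x * b by eexists.
    rewrite -ey in Uy.
    have Ay := U_A Uy.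
    have eq : b * y = x * b by rewrite ey !mulrA mulrV // mul1r.
    have s1 := K1 (HA _ (A_mul Ab Ay)) (A_mul (HA b Ab) (HA y Ay)) (Hm b y Ab Ay).
    have s2 := K1 (HA _ (A_mul Ax Ab)) (A_mul (HA x Ax) (HA b Ab)) (Hm x b Ax Ab).
    have s3 := K1 (HA b Ab) Aw cb.
    have e1 : sig (w * f y) = sig (f x * w).
      rewrite -(sig_eq_mul (AU _ (HA b Ab)) (AU _ (HA y Ay)) Uw.1 (AU _ (HA y Ay)) s3 erefl).
      rewrite -s1 eq s2.
      exact: (sig_eq_mul (AU _ An) (AU _ (HA b Ab)) (AU _ An) Uw.1 erefl s3).
    exists (f y); split.
    + exact: HA.
    + have Uwi := uni_inv Uw.
      rewrite -(mulKr uw (f y)) -mulrA.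
      exact: (sig_eq_mul Uwi.1 (UT_mul Uw.1 (AU _ (HA y Ay))) Uwi.1 (UT_mul (AU _ An) Uw.1) erefl e1).
    + have cyx : congU4' (y * x) (x * y).
        rewrite /congU4' invrM ?uni_unit // !mulrA; exact: U4'_comm.
      have Ayx := A_mul Ay Ax; have Axy := A_mul Ax Ay.
      have t := K1 (HA _ Ayx) (HA _ Axy) ((Hc _ _ Ayx Axy).1 cyx).
      rewrite -(K1 (HA _ Ayx) (A_mul (HA y Ay) An) (Hm y x Ay Ax)) t.
      exact: (K1 (HA _ Axy) (A_mul An (HA y Ay)) (Hm x y Ax Ay)).
  have [m0 [Am0 e0 c0]] := step _ Wu0.
  have [m2 [Am2 e2 c2]] := step _ Wu2.
  apply: U_of => //; [exact: core0 e0 c0 | exact: core2 e2 c2].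
- move=> Ufx.
  have Uf : Uni (f x) := Ufx.
  have step : forall w : 'M[R]_4, Uni w -> exists m, [/\ is_A4 m,
      sig m = sig (w^-1 * x * w) & sig (m * x) = sig (x * m)].
    move=> w Uw; have Aw := U_A Uw; have uw := uni_unit Uw.
    have Az := A_mul (A_mul (U_A (uni_inv Uw)) Ax) Aw.
    have [z ez] : exists z, z = w^-1 * x * w by eexists.
    rewrite -ez in Az.
    have eq : w * z = x * w by rewrite ez !mulrA mulrV // mul1r.
    have s1 := K1 (HA _ (A_mul Aw Az)) (A_mul (HA w Aw) (HA z Az)) (Hm w z Aw Az).
    have s2 := K1 (HA _ (A_mul Ax Aw)) (A_mul (HA x Ax) (HA w Aw)) (Hm x w Ax Aw).
    have e : sig (f w * f z) = sig (f x * f w) by rewrite -s1 eq s2.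
    have Afw := HA w Aw; have Afz := HA z Az.
    move: e; rewrite /sig !(diag_mul _ (AU _ Afw) (AU _ Afz)) !(diag_mul _ Uf.1 (AU _ Afw)).
    move=> [= _ h1 h2 _ _ _ _].
    have Ufz : Uni (f z).
      apply: U_of => //.
      - by apply: (mulrI (A_du o1 Afw)); rewrite h1 Uf.2 mul1r mulr1.
      - by apply: (mulrI (A_du o2 Afw)); rewrite h2 Uf.2 mul1r mulr1.
    have Axz := A_mul Ax Az; have Azx := A_mul Az Ax.
    have c1 : congU4' (f (x * z)) (f (z * x)).
      apply: (cong_trans (y := f x * f z)); first exact: A_unit (A_mul (HA x Ax) Afz).
        exact: Hm.
      apply: (cong_trans (y := f z * f x)); first exact: A_unit (A_mul Afz (HA x Ax)).
        rewrite /congU4' invrM ?uni_unit // !mulrA; exact: U4'_comm.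
      apply: cong_sym; [exact: A_unit (HA _ Azx) | exact: A_unit (A_mul Afz (HA x Ax)) | exact: Hm].
    have := K1 Axz Azx ((Hc _ _ Axz Azx).2 c1) => t.
    by exists z; split => //; rewrite ez.
  have [m0 [Am0 e0 c0]] := step _ Wu0.
  have [m2 [Am2 e2 c2]] := step _ Wu2.
  apply: U_of => //; [exact: core0 e0 c0 | exact: core2 e2 c2].
Qed.
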